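(* Each brick and each brace of a cycle-extendable graph is cycle-extendable.
   Context: Graphs are loopless; multiple edges allowed. A graph is matching covered if it is connected, has at least two vertices, and every edge lies in some perfect matching; it is cycle-extendable if moreover for every even cycle $C$ the graph $G-V(C)$ has a perfect matching. For $X\subseteq V(G)$, $\partial(X)$ is the set of edges with exactly one end in $X$; it is a tight cut if every perfect matching contains exactly one edge of it, and nontrivial if both $X$ and $V(G)\setminus X$ have at least two vertices. The $\partial(X)$-contractions are obtained by shrinking $X$, respectively $V(G)\setminus X$, to a single vertex (keeping parallel edges). The bricks and braces of a matching covered graph are the graphs obtained by repeatedly replacing a graph having a nontrivial tight cut by its two cut-contractions until no nontrivial tight cuts remain: the resulting nonbipartite graphs are its bricks and the bipartite ones its braces. *)

(* Defs.v *)
From mathcomp Require Import all_boot.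
Set Implicit Arguments. Unset Strict Implicit. Unset Printing Implicit Defensive.

(* A (multi)graph: a finite vertex type, a finite edge type, and the
   ordered pair of ends of each edge (orientation is irrelevant below). *)
Record mgraph := MGraph {
  gV : finType;
  gE : finType;
  gends : gE -> gV * gV
}.

Section Defs.
Variable G : mgraph.
Local Notation V := (gV G).
Local Notation E := (gE G).
Local Notation ends := (@gends G).

Definition loopless : bool := [forall e : E, (ends e).1 != (ends e).2].

Definition incident (e : E) (v : V) : bool :=
  ((ends e).1 == v) || ((ends e).2 == v).

Definition joins (e : E) (u v : V) : bool :=
  (ends e == (u, v)) || (ends e == (v, u)).

Definition adjacent (u v : V) : bool := [exists e : E, joins e u v].

Definition gconnected : Prop := forall u v : V, connect adjacent u v.

(* M is a perfect matching of G - S: every edge of M avoids S and every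
   vertex outside S is incident with exactly one edge of M. *)
Definition perfect_matching_avoiding (S : {set V}) (M : {set E}) : bool :=
  [forall e in M, ((ends e).1 \notin S) && ((ends e).2 \notin S)] &&
  [forall v in ~: S, #|[set e in M | incident e v]| == 1].

Definition perfect_matching (M : {set E}) : bool :=
  perfect_matching_avoiding set0 M.

Definition matching_covered : Prop :=
  [/\ loopless, gconnected, 2 <= #|V|
    & forall e : E, exists M : {set E}, perfect_matching M && (e \in M)].

(* (vs, es) is a cycle: distinct vertices v_0..v_{k-1} (k >= 2) and
   distinct edges e_0..e_{k-1}, with e_i joining v_i and v_{i+1 mod k}.
   (For k = 2 this is a pair of parallel edges.) *)
Definition is_cycle (vs : seq V) (es : seq E) : bool :=
  [&& 2 <= size vs, size es == size vs, uniq vs, uniq es &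
      all (fun p => joins p.1 p.2.1 p.2.2) (zip es (zip vs (rot 1 vs)))].

Definition cycle_extendable : Prop :=
  matching_covered /\
  forall (vs : seq V) (es : seq E), is_cycle vs es -> ~~ odd (size vs) ->
    exists M : {set E}, perfect_matching_avoiding [set v in vs] M.

Definition cut (X : {set V}) : {set E} :=
  [set e | ((ends e).1 \in X) != ((ends e).2 \in X)].

Definition tight_cut (X : {set V}) : Prop :=
  forall M : {set E}, perfect_matching M -> #|M :&: cut X| = 1.

Definition nontrivial_cut (X : {set V}) : bool :=
  (2 <= #|X|) && (2 <= #|~: X|).

Definition bipartite : Prop :=
  exists A : {set V}, forall e : E, ((ends e).1 \in A) != ((ends e).2 \in A).

(* The contraction G/(X -> x): X is shrunk to a single new vertex (None);
   edges with both ends in X would become loops and are deleted;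
   all other edges (incl. parallel ones) are kept. *)
Definition cV (X : {set V}) : finType := option {v : V | v \notin X}.
Definition cE (X : {set V}) : finType :=
  {e : E | ((ends e).1 \notin X) || ((ends e).2 \notin X)}.
Definition cmap (X : {set V}) (v : V) : cV X :=
  match boolP (v \in X) with
  | AltTrue _ => None
  | AltFalse h => Some (exist _ v h)
  end.
Definition cends (X : {set V}) (e : cE X) : cV X * cV X :=
  (cmap X (ends (val e)).1, cmap X (ends (val e)).2).

End Defs.

Definition contract (G : mgraph) (X : {set gV G}) : mgraph :=
  @MGraph (cV X) (cE X) (@cends G X).

Inductive tc_reach (G : mgraph) : mgraph -> Prop :=
| tc_refl : tc_reach G G
| tc_shrinkX (X : {set gV G}) (H : mgraph) :
    nontrivial_cut X -> tight_cut X -> tc_reach (contract X) H -> tc_reach G H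
| tc_shrinkXc (X : {set gV G}) (H : mgraph) :
    nontrivial_cut X -> tight_cut X -> tc_reach (contract (~: X)) H -> tc_reach G H.

Definition no_nontrivial_tight_cut (H : mgraph) : Prop :=
  forall X : {set gV H}, nontrivial_cut X -> ~ tight_cut X.

Definition brick_of (G H : mgraph) : Prop :=
  [/\ tc_reach G H, no_nontrivial_tight_cut H & ~ bipartite H].

Definition brace_of (G H : mgraph) : Prop :=
  [/\ tc_reach G H, no_nontrivial_tight_cut H & bipartite H].

(* Main.v *)
Require Import Defs.
From mathcomp Require Import all_boot.
From mathcomp Require Import zify.
Set Implicit Arguments. Unset Strict Implicit. Unset Printing Implicit Defensive.

Section Gen.
Variable G : mgraph.
Local Notation V := (gV G).
Local Notation E := (gE G).
Local Notation ends := (@gends G).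

Lemma joinsC (e : E) u v : joins e u v = joins e v u.
Proof. by rewrite /joins orbC. Qed.

Lemma joins_ends (e : E) u v : joins e u v ->
  (((ends e).1 == u) || ((ends e).1 == v)) && (((ends e).2 == u) || ((ends e).2 == v)).
Proof.
by case/orP=> /eqP ->; rewrite /= !eqxx ?orbT.
Qed.

Lemma joins_incident (e : E) u v x : joins e u v -> incident e x = (x == u) || (x == v).
Proof.
rewrite /incident; case/orP=> /eqP -> /=.
  by rewrite ![_ == x]eq_sym.
by rewrite ![_ == x]eq_sym orbC.
Qed.

Lemma joins_uniq (e : E) a b c : joins e a b -> joins e a c -> b = c.
Proof.
rewrite /joins => /orP[]/eqP H1 /orP[]/eqP H2; rewrite H1 in H2; case: H2; congruence.
Qed.

Lemma joins_neq (e : E) a b : loopless G -> joins e a b -> a != b.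
Proof.
move=> /forallP /(_ e) Hl /orP[]/eqP He; rewrite He in Hl => //. by rewrite eq_sym.
Qed.

Fixpoint jpath (x : V) (es : seq E) (s : seq V) : bool :=
  match es, s with
  | e :: es', y :: s' => joins e x y && jpath y es' s'
  | [::], [::] => true
  | _, _ => false
  end.

Lemma jpath_size x es s : jpath x es s -> size es = size s.
Proof.
elim: es x s => [|e es IH] x [|y s] //= /andP[_ /IH] ->. by [].
Qed.

Lemma jpath_cat x es1 es2 s1 s2 : size es1 = size s1 ->
  jpath x (es1 ++ es2) (s1 ++ s2) = jpath x es1 s1 && jpath (last x s1) es2 s2.
Proof.
elim: es1 x s1 => [|e es IH] x [|y s] //= [] /IH ->. by rewrite andbA.
Qed.

Lemma jpath_all x es s : jpath x es s =
  (size es == size s) && all (fun p => joins p.1 p.2.1 p.2.2) (zip es (zip (belast x s) s)).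
Proof.
elim: es x s => [|e es IH] x [|y s] //=. by rewrite IH eqSS andbCA.
Qed.

Lemma is_cycleE x s es : is_cycle (x :: s) es =
  [&& 0 < size s, size es == (size s).+1, uniq (x :: s), uniq es & jpath x es (rcons s x)].
Proof.
rewrite /is_cycle rot1_cons jpath_all belast_rcons size_rcons /=.
by case: (size es == _); rewrite ?andbF.
Qed.

Lemma jpath_nth x es s e0 v0 : jpath x es s ->
  forall i, i < size s -> joins (nth e0 es i) (nth v0 (x :: s) i) (nth v0 s i).
Proof.
elim: es x s => [|e es IH] x [|y s] //= /andP[H1 H2] [|i] //= Hi.
exact: IH.
Qed.

Lemma jpath_nthP x es s e0 v0 : size es = size s ->
  (forall i, i < size s -> joins (nth e0 es i) (nth v0 (x :: s) i) (nth v0 s i)) ->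
  jpath x es s.
Proof.
elim: es x s => [|e es IH] x [|y s] //= [Hs] H.
rewrite (H 0 erefl) /=. apply: IH => // i Hi. exact: (H i.+1).
Qed.

Lemma jpath_ends x es s e : jpath x es s -> e \in es ->
  ((ends e).1 \in x :: s) && ((ends e).2 \in x :: s).
Proof.
elim: es x s => [|f es IH] x [|y s] //= /andP[Hf Hp].
rewrite inE => /orP[/eqP ->|He].
  move/joins_ends: Hf => /andP[] /orP[]/eqP-> /orP[]/eqP->;
  by rewrite !inE !eqxx ?orbT.
move/andP: (IH _ _ Hp He) => [H1 H2].
by rewrite (in_cons x) H1 (in_cons x) H2 !orbT.
Qed.

Lemma jpath_uniq x es s : jpath x es s -> uniq (x :: s) -> uniq es.
Proof.
elim: es x s => [|f es IH] x [|y s] //= /andP[Hf Hp] /andP[Hx Hu].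
rewrite (IH _ _ Hp Hu) andbT. apply/negP => He.
move/andP: (jpath_ends Hp He) => [H1 H2].
case/orP: Hf => /eqP Hf; rewrite Hf /= in H1 H2.
- by rewrite H1 in Hx.
- by rewrite H2 in Hx.
Qed.

Lemma is_cycle_rot1 (vs : seq V) (es : seq E) : is_cycle vs es -> is_cycle (rot 1 vs) (rot 1 es).
Proof.
move=> Hc. have := Hc; case/and5P => H2 /eqP Hs _ _ _.
case: vs H2 Hs Hc => [|x [|y s]] // _.
case: es => [|e es] // _.
rewrite !rot1_cons /= is_cycleE => /and5P[_ Hsz Hu Hue Hp].
rewrite is_cycleE size_rcons /= size_rcons.
move: Hsz; rewrite /= => Hsz. rewrite Hsz /=.

have Hu' : uniq (y :: rcons s x) by rewrite -rcons_cons -rot1_cons rot_uniq.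
have -> : uniq (rcons es e) by rewrite -rot1_cons rot_uniq.
rewrite /= in Hu'; rewrite Hu' /=.
move: Hp => /= /andP[Hj Hp].
rewrite -cats1 -[rcons (rcons s x) y]cats1 jpath_cat; last first.
  by rewrite size_rcons; apply/eqP.
by rewrite Hp last_rcons /= Hj.
Qed.

Lemma is_cycle_rot i (vs : seq V) (es : seq E) : i <= size vs -> is_cycle vs es -> is_cycle (rot i vs) (rot i es).
Proof.
move=> Hi Hc. have Hs : size es = size vs by case/and5P: Hc => _ /eqP.
elim: i Hi => [|i IH] Hi; first by rewrite !rot0.
rewrite -add1n !rotD ?Hs //. apply: is_cycle_rot1. apply: IH. exact: ltnW.
Qed.

End Gen.

Definition nxt k i := if i.+1 == k then 0 else i.+1.
Definition prv k j := if j == 0 then k.-1 else j.-1.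

Lemma nxt_lt k i : i < k -> nxt k i < k.
Proof. rewrite /nxt; case: eqP; lia. Qed.

Lemma prv_lt k j : j < k -> prv k j < k.
Proof. rewrite /prv; case: eqP; lia. Qed.

Lemma nxt_prv k i j : i < k -> j < k -> (nxt k i == j) = (i == prv k j).
Proof.
rewrite /nxt /prv => Hi Hj.
case: ifP => /eqP H1; case: ifP => /eqP H2; apply/idP/idP => /eqP ?; apply/eqP; lia.
Qed.

Lemma odd_nxt k i : ~~ odd k -> i < k -> odd (nxt k i) = ~~ odd i.
Proof.
rewrite /nxt; case: eqP => [Hk|_] Hodd Hi //.
by move: Hodd; rewrite -Hk /= negbK => ->.
Qed.

Lemma count_one k j (p : bool) : 1 < k -> ~~ odd k -> j < k ->
  exists2 i1, i1 < k &
    forall i, i < k -> (odd i == p) && ((i == j) || (nxt k i == j)) = (i == i1).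
Proof.
move=> Hk Hodd Hj.
have Hop : odd (prv k j) = ~~ odd j.
  have Hp := prv_lt Hj.
  have : nxt k (prv k j) == j by rewrite nxt_prv.
  by move/eqP => E; rewrite -{2}E odd_nxt // negbK.
case Hjp: (odd j == p).
  exists j => // i Hi.
  case: (eqVneq i j) => [->|Hij]; first by rewrite Hjp.
  rewrite /=; case: (eqVneq (nxt k i) j) => [E|]; last by rewrite andbF.
  by move: Hjp; rewrite -E odd_nxt // andbT; case: (odd i); case: p.
exists (prv k j); first exact: prv_lt.
move=> i Hi. rewrite nxt_prv //.
case: (eqVneq i (prv k j)) => [->|Hij].
  rewrite Hop orbT andbT.
  by move: Hjp; case: (odd j); case: p.
rewrite orbF; case: (eqVneq i j) => [E|]; last by rewrite andbF.
by rewrite E Hjp.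
Qed.

Section Gen2.
Variable G : mgraph.
Local Notation V := (gV G).
Local Notation E := (gE G).
Local Notation ends := (@gends G).

Definition pm_on (S : {set V}) (N : {set E}) : bool :=
  [forall e in N, ((ends e).1 \in S) && ((ends e).2 \in S)] &&
  [forall v in S, #|[set e in N | incident e v]| == 1].

Lemma cycle_alt (vs : seq V) (es : seq E) e :
  is_cycle vs es -> ~~ odd (size vs) -> e \in es ->
  exists N : {set E}, [/\ e \in N, {subset N <= es} & pm_on [set v in vs] N].
Proof.
move=> Hc Hodd He.
have := Hc; case/and5P => H2 /eqP Hsz Hu Hue _.
case: vs Hc H2 Hsz Hu Hodd => [|x s] // Hc H2 Hsz Hu Hodd.
move: Hc; rewrite is_cycleE => /and5P[_ _ _ _ Hp].
set k := size (x :: s).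
have Hj : forall i, i < k ->
    joins (nth e es i) (nth x (x :: s) i) (nth x (x :: s) (nxt k i)).
  move=> i Hi. have Hi' : i < size (rcons s x) by rewrite size_rcons.
  have := jpath_nth e x Hp Hi'.
  have -> : nth x (x :: rcons s x) i = nth x (x :: s) i.
    by rewrite -rcons_cons nth_rcons Hi.
  have -> : nth x (rcons s x) i = nth x (x :: s) (nxt k i) => //.
  rewrite nth_rcons /nxt /k /= eqSS.
  case: ltngtP => // H; move: Hi; rewrite /k /=; lia.
set p := odd (index e es).
have Hie : index e es < k by rewrite /k -Hsz index_mem.
have Hinj : injective (fun i : 'I_k => nth e es i).
  move=> i1 i2 /eqP; rewrite nth_uniq ?Hsz // => /eqP; apply: val_inj.
have Hm : forall i, i < k -> nth x (x :: s) i \in x :: s.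
  by move=> i Hi; apply: mem_nth.
exists ((fun i : 'I_k => nth e es i) @: [set i : 'I_k | odd i == p]).
split.
- apply/imsetP; exists (Ordinal Hie); first by rewrite inE.
  by rewrite /= nth_index.
- move=> f /imsetP[i _ ->]; apply: mem_nth; rewrite Hsz; exact: ltn_ord.
- apply/andP; split.
  + apply/forall_inP => f /imsetP[i _ ->].
    have := joins_ends (Hj i (ltn_ord i)).
    move=> /andP[] /orP[]/eqP-> /orP[]/eqP->; by rewrite !in_set !Hm ?nxt_lt.
  + apply/forall_inP => v; rewrite inE => Hv.
    set j := index v (x :: s).
    have Hjk : j < k by rewrite index_mem.
    have Hvj : nth x (x :: s) j = v by apply: nth_index.
    have Hinc : forall i : 'I_k,
        incident (nth e es i) v = ((i == j :> nat) || (nxt k i == j)).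
      move=> i. rewrite (joins_incident _ (Hj i (ltn_ord i))) -Hvj !nth_uniq ?nxt_lt //.
      by rewrite eq_sym [j == nxt _ _]eq_sym.
    have -> : [set f in (fun i : 'I_k => nth e es i) @: [set i : 'I_k | odd i == p]
               | incident f v] =
        (fun i : 'I_k => nth e es i) @:
          [set i : 'I_k | (odd i == p) && ((i == j :> nat) || (nxt k i == j))].
      apply/setP => f; rewrite !inE. apply/andP/imsetP.
        case=> /imsetP[i Hi ->] Hf. exists i => //.
        by rewrite inE -Hinc Hf andbT; rewrite inE in Hi.
      case=> i; rewrite inE => /andP[Hi1 Hi2] ->. split.
        by apply/imsetP; exists i => //; rewrite inE.
      by rewrite Hinc.
    rewrite card_imset //.
    have [i1 Hi1 Hkey] := count_one p H2 Hodd Hjk.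
    rewrite (_ : [set i : 'I_k | _] = [set Ordinal Hi1]) ?cards1 //.
    apply/setP => i; rewrite !inE Hkey //.
Qed.

End Gen2.

Section Gen3.
Variable G : mgraph.
Local Notation V := (gV G).
Local Notation E := (gE G).
Local Notation ends := (@gends G).

Lemma pm_union (S : {set V}) (M N : {set E}) :
  perfect_matching_avoiding S M -> pm_on S N -> perfect_matching (M :|: N).
Proof.
case/andP => /forall_inP HM1 /forall_inP HM2 /andP[/forall_inP HN1 /forall_inP HN2].
apply/andP; split; first by apply/forall_inP => e _; rewrite !inE.
apply/forall_inP => v _.
case: (boolP (v \in S)) => Hv.
  rewrite (_ : [set e in M :|: N | incident e v] = [set e in N | incident e v]).
    exact: HN2.
  apply/setP => e; rewrite !inE. case: (boolP (e \in M)) => HeM //=.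
  have/andP[h1 h2] := HM1 e HeM.
  have Hi : incident e v = false.
    rewrite /incident; apply/negbTE; apply/norP; split; apply/eqP => Ee;
    [move: h1|move: h2]; by rewrite Ee Hv.
  by rewrite Hi andbF.
rewrite (_ : [set e in M :|: N | incident e v] = [set e in M | incident e v]).
  by apply: HM2; rewrite inE.
apply/setP => e; rewrite !inE. case: (boolP (e \in N)) => HeN //=; last by rewrite orbF.
have/andP[h1 h2] := HN1 e HeN.
have Hi : incident e v = false.
  rewrite /incident; apply/negbTE; apply/norP; split; apply/eqP => Ee;
  [move: h1|move: h2]; by rewrite Ee (negbTE Hv).
by rewrite Hi !andbF.
Qed.

Lemma pm_union_card (S : {set V}) (M N C : {set E}) :
  perfect_matching_avoiding S M -> pm_on S N ->
  #|(M :|: N) :&: C| = #|M :&: C| + #|N :&: C|.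
Proof.
case/andP => /forall_inP HM1 _ /andP[/forall_inP HN1 _].
rewrite setIUl cardsU.
rewrite (_ : (M :&: C) :&: (N :&: C) = set0) ?cards0 ?subn0 //.
apply/setP => e; rewrite !inE.
apply/negbTE; apply/negP => /andP[/andP[HeM _] /andP[HeN _]].
have/andP[h1 _] := HM1 e HeM. have/andP[h1' _] := HN1 e HeN.
by rewrite h1' in h1.
Qed.

Definition cyc_ext_hyp : Prop :=
  forall (vs : seq V) (es : seq E), is_cycle vs es -> ~~ odd (size vs) ->
    exists M : {set E}, perfect_matching_avoiding [set v in vs] M.

Lemma ext_cut0 (X : {set V}) (vs : seq V) (es : seq E) e :
  tight_cut X -> cyc_ext_hyp -> is_cycle vs es -> ~~ odd (size vs) ->
  e \in es -> e \in cut X ->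
  exists M, perfect_matching_avoiding [set v in vs] M /\ #|M :&: cut X| = 0.
Proof.
move=> Ht Hyp Hc Hodd He HeX.
have [M HM] := Hyp _ _ Hc Hodd.
have [N [HeN Hsub Hpm]] := cycle_alt Hc Hodd He.
exists M; split => //.
have := Ht _ (pm_union HM Hpm). rewrite (pm_union_card (cut X) HM Hpm).
have : 0 < #|N :&: cut X| by apply/card_gt0P; exists e; rewrite inE HeN.
lia.
Qed.

Lemma ext_cut1 (X : {set V}) (vs : seq V) (es : seq E) :
  tight_cut X -> cyc_ext_hyp -> is_cycle vs es -> ~~ odd (size vs) ->
  (forall f, f \in es -> f \notin cut X) ->
  exists M, perfect_matching_avoiding [set v in vs] M /\ #|M :&: cut X| = 1.
Proof.
move=> Ht Hyp Hc Hodd Hno.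
have [M HM] := Hyp _ _ Hc Hodd.
have := Hc; case/and5P => H2 /eqP Hsz _ _ _.
case: es Hc Hsz Hno => [|e es] Hc Hsz Hno; first by rewrite -Hsz in H2.
have [N [HeN Hsub Hpm]] := cycle_alt Hc Hodd (mem_head e es).
exists M; split => //.
have := Ht _ (pm_union HM Hpm). rewrite (pm_union_card (cut X) HM Hpm).
rewrite (_ : N :&: cut X = set0) ?cards0 ?addn0 //.
apply/setP => f; rewrite !inE; apply/negbTE; apply/negP => /andP[Hf Hc'].
by move: (Hno f (Hsub f Hf)); rewrite inE Hc'.
Qed.

End Gen3.

Section Mates.
Variable G : mgraph.
Local Notation V := (gV G).
Local Notation E := (gE G).
Local Notation ends := (@gends G).

Definition other (e : E) (v : V) := if (ends e).1 == v then (ends e).2 else (ends e).1.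
Definition mate (M : {set E}) (v : V) : V :=
  if [pick e in M | incident e v] is Some e then other e v else v.

Lemma incident_joins (e : E) v : incident e v -> joins e v (other e v).
Proof.
rewrite /incident /other /joins.
case: (ends e) => a b /=. case: (eqVneq a v) => [->|H] /=; first by rewrite eqxx.
by move/eqP => ->; rewrite eqxx orbT.
Qed.

Lemma mateP (M : {set E}) v : perfect_matching M ->
  exists e, [/\ [pick f in M | incident f v] = Some e, e \in M, joins e v (mate M v)
             & forall f, f \in M -> incident f v -> f = e].
Proof.
move=> /andP[_ /forall_inP H]. have := H v; rewrite !inE => /(_ isT). case/cards1P => e0 He0.
have Hmem : forall f, (f \in M) && incident f v = (f == e0).
  by move=> f; rewrite -in_set1 -He0 inE.
rewrite /mate. case: pickP => [e He | Hn]; last by have := Hn e0; rewrite Hmem eqxx.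
rewrite Hmem in He; move/eqP: He => ->.
have/andP[H1 H2] : (e0 \in M) && incident e0 v by rewrite Hmem.
exists e0; split => //; first exact: incident_joins.
by move=> f Hf Hi; apply/eqP; rewrite -Hmem Hf Hi.
Qed.

Lemma mate_inv (M : {set E}) v : perfect_matching M -> mate M (mate M v) = v.
Proof.
move=> HM.
have [e [_ HeM Hj _]] := mateP v HM.
have [e' [_ He'M Hj' Hu']] := mateP (mate M v) HM.
have Ee : e = e'.
  apply: Hu' => //. by rewrite (joins_incident _ Hj) eqxx orbT.
rewrite -Ee in Hj'. rewrite joinsC in Hj.
by rewrite (joins_uniq Hj' Hj).
Qed.

Lemma mate_neq (M : {set E}) v : loopless G -> perfect_matching M -> mate M v != v.
Proof.
move=> Hl HM. have [e [_ _ Hj _]] := mateP v HM.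
by rewrite eq_sym (joins_neq Hl Hj).
Qed.

Lemma mate_edge (M : {set E}) c a b : perfect_matching M -> c \in M -> joins c a b ->
  mate M a = b.
Proof.
move=> HM Hc Hj. have [e [_ _ Hj' Hu]] := mateP a HM.
have Ee : c = e by apply: Hu => //; rewrite (joins_incident _ Hj) eqxx.
rewrite -Ee in Hj'. exact: (joins_uniq Hj' Hj).
Qed.

Lemma joins_cut (X : {set V}) (e : E) u w : joins e u w -> u \in X -> w \notin X ->
  e \in cut X.
Proof.
move=> Hj Hu Hw; rewrite inE.
by case/orP: Hj => /eqP ->; rewrite /= Hu (negbTE Hw).
Qed.

Lemma mate_X (X : {set V}) (M : {set E}) c a b v :
  tight_cut X -> perfect_matching M -> c \in M -> joins c a b -> a \in X -> b \notin X ->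
  v \in X -> v != a -> mate M v \in X.
Proof.
move=> Ht HM Hc Hj Ha Hb Hv Hva.
have [e [_ HeM Hje _]] := mateP v HM.
apply/negPn/negP => Hout.
have Hec := joins_cut Hje Hv Hout.
have Hcc := joins_cut Hj Ha Hb.
have/eqP := Ht M HM. case/cards1P => x Hx.
have : e \in M :&: cut X by rewrite inE HeM Hec.
have : c \in M :&: cut X by rewrite inE Hc Hcc.
rewrite Hx !inE => /eqP Ec /eqP Ee. rewrite -Ec in Ee. subst e.
have := joins_incident v Hj. rewrite (joins_incident _ Hje) eqxx /= => /esym/orP[].
  by rewrite (negbTE Hva).
by move/eqP => Evb; move: Hb; rewrite -Evb Hv.
Qed.

End Mates.

Lemma walk_fresh (T : eqType) (st : bool -> T -> T) (s : seq T) (x0 : T) :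
  (forall b v, st b (st b v) = v) -> uniq s ->
  (forall k, k.+1 < size s -> nth x0 s k.+1 = st (odd k) (nth x0 s k)) ->
  forall i j, i < j -> j < size s -> st (odd j) (nth x0 s j) = nth x0 s i -> i = 0 /\ odd j.
Proof.
move=> Hinv Hu HW i j Hij Hj E.
have Hnu : forall m n, m < size s -> n < size s -> nth x0 s m = nth x0 s n -> m = n.
  by move=> m n Hm Hn Emn; apply/eqP; rewrite -(nth_uniq x0 Hm Hn Hu) Emn.
have E' : nth x0 s j = st (odd j) (nth x0 s i) by rewrite -E Hinv.
case: i Hij E E' => [|i'] Hij E E'.
  split => //. case Hoj: (odd j) => //.
  have H1 := HW 0 (leq_ltn_trans Hij Hj).
  rewrite Hoj /= in E'. rewrite -H1 in E'.
  have Ej : j = 1 := Hnu _ _ Hj (leq_ltn_trans Hij Hj) E'.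
  by rewrite Ej in Hoj.
have Hi's : i'.+1 < size s by apply: ltn_trans Hj.
have Hw1 := HW i' Hi's.
have Hw2 := HW i'.+1 (leq_ltn_trans Hij Hj).
case: (eqVneq (odd j) (odd i'.+1)) => Hp.
  rewrite Hp -Hw2 in E'.
  have Ej := Hnu _ _ Hj (leq_ltn_trans Hij Hj) E'.
  by move: Hp; rewrite Ej /= negbK; case: (odd i').
have Hp' : odd j = odd i' by move: Hp; rewrite /=; case: (odd j); case: (odd i').
rewrite Hp' Hw1 Hinv in E'.
have Ej := Hnu _ _ Hj (ltnW Hi's) E'.
by rewrite Ej ltnNge leqnSn in Hij.
Qed.

Section EvenPath.
Variable G : mgraph.
Local Notation V := (gV G).
Local Notation E := (gE G).
Local Notation ends := (@gends G).

Lemma uniq_size_le (X : {set V}) (s : seq V) : uniq s -> all (fun v => v \in X) s ->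
  size s <= #|X|.
Proof.
move=> Hu Hall. rewrite -(card_uniqP Hu). apply: subset_leq_card.
apply/subsetP => v Hv. exact: (allP Hall).
Qed.

Lemma even_path (X : {set V}) (a1 b1 : V) (c1 : E) (a2 b2 : V) (c2 : E) :
  loopless G -> tight_cut X -> (forall e : E, exists M, perfect_matching M && (e \in M)) ->
  joins c1 a1 b1 -> a1 \in X -> b1 \notin X ->
  joins c2 a2 b2 -> a2 \in X -> b2 \notin X ->
  exists pvs pes, [/\ jpath a1 pes pvs, last a1 pvs = a2, uniq (a1 :: pvs),
     all (fun v => v \in X) (a1 :: pvs) & ~~ odd (size pes)].
Proof.
move=> Hl Ht Hmc Hj1 Ha1 Hb1 Hj2 Ha2 Hb2.
case: (eqVneq a1 a2) => [<-|Hne]; first by exists [::], [::]; rewrite /= Ha1.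
have [M1 /andP[HM1 Hc1]] := Hmc c1.
have [M2 /andP[HM2 Hc2]] := Hmc c2.
pose MM (b : bool) := if b then M1 else M2.
pose st (b : bool) := mate (MM b).
have Hpm : forall b, perfect_matching (MM b) by case.
have Hinv : forall b v, st b (st b v) = v by move=> b v; apply: mate_inv.
have Hneq : forall b v, st b v != v by move=> b v; apply: mate_neq.
pose W (s : seq V) := forall k, k.+1 < size s -> nth a1 s k.+1 = st (odd k) (nth a1 s k).
have step : forall xs, W (a1 :: xs) -> uniq (a1 :: xs) -> all (fun v => v \in X) (a1 :: xs) ->
    (~~ odd (size xs) && (last a1 xs == a2)) = false ->
    let y := st (odd (size xs)) (last a1 xs) in
    [/\ W (a1 :: rcons xs y), uniq (a1 :: rcons xs y) & all (fun v => v \in X) (a1 :: rcons xs y)].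
  move=> xs HW Hu Hall Hstop y.
  set s := a1 :: xs. set j := size xs.
  have Hxj : nth a1 s j = last a1 xs by rewrite -[j]/((size s).-1) nth_last.
  have Hxjs : last a1 xs \in s by rewrite mem_last.
  have HxjX : last a1 xs \in X := allP Hall _ Hxjs.
  have Hsz : size s = j.+1 by [].
  have HyX : y \in X.
    rewrite /y /st /MM; case Hoj: (odd j).
      apply: (mate_X Ht HM1 Hc1 Hj1 Ha1 Hb1 HxjX).
      rewrite -Hxj -[a1]/(nth a1 s 0) nth_uniq //.
      by apply/eqP => E0; rewrite E0 in Hoj.
    apply: (mate_X Ht HM2 Hc2 Hj2 Ha2 Hb2 HxjX).
    by move: Hstop; rewrite Hoj /= => ->.
  have Hyn : y \notin s.
    apply/negP => Hy.
    have [i Hi Hyi] : exists2 i, i < size s & nth a1 s i = y.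
      by exists (index y s); [rewrite index_mem | apply: nth_index].
    case: (ltngtP i j) => [Hij | Hji | Eij].
    - have Hjs : j < size s by rewrite Hsz.
      have E1 : st (odd j) (nth a1 s j) = nth a1 s i by rewrite Hyi Hxj.
      have [Ei0 Hoj] := walk_fresh Hinv Hu HW Hij Hjs E1.
      rewrite Ei0 Hoj in E1.
      have E2 : nth a1 s j = st true (nth a1 s 0) by rewrite -E1 Hinv.
      have E3 : st true (nth a1 s 0) = b1 := mate_edge HM1 Hc1 Hj1.
      by move: Hb1; rewrite -E3 -E2 Hxj HxjX.
    - by move: Hi; rewrite Hsz ltnS leqNgt Hji.
    - move: Hyi; rewrite Eij Hxj /y => E1.
      by have := Hneq (odd j) (last a1 xs); rewrite -E1 eqxx.
  split.
  - move=> k; rewrite -rcons_cons size_rcons !nth_rcons -/s => Hk.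
    have Hks : k < size s by rewrite -ltnS.
    rewrite Hks. case: (ltnP k.+1 (size s)) => Hk1; first exact: HW.
    have Ek : k.+1 = size s by apply/eqP; rewrite eqn_leq Hk1 Hks.
    rewrite Ek eqxx.
    have -> : k = j by apply/eqP; rewrite -eqSS Ek Hsz.
    by rewrite Hxj.
  - by rewrite -rcons_cons rcons_uniq Hyn Hu.
  - by rewrite -rcons_cons all_rcons HyX Hall.
have walk : forall n xs, W (a1 :: xs) -> uniq (a1 :: xs) -> all (fun v => v \in X) (a1 :: xs) ->
    #|X| <= size (a1 :: xs) + n ->
    exists ys, [/\ W (a1 :: ys), uniq (a1 :: ys), all (fun v => v \in X) (a1 :: ys),
                   last a1 ys = a2 & ~~ odd (size ys)].
  elim => [|n IH] xs HW Hu Hall Hn.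
    case Hstop: (~~ odd (size xs) && (last a1 xs == a2)).
      by case/andP: Hstop => H1 /eqP H2; exists xs.
    have [HW' Hu' Hall'] := step xs HW Hu Hall Hstop.
    have := uniq_size_le Hu' Hall'; rewrite /= (size_rcons xs) => Hle.
    by have := leq_trans Hle Hn; rewrite /= addn0 ltnn.
  case Hstop: (~~ odd (size xs) && (last a1 xs == a2)).
    by case/andP: Hstop => H1 /eqP H2; exists xs.
  have [HW' Hu' Hall'] := step xs HW Hu Hall Hstop.
  apply: (IH _ HW' Hu' Hall'). by rewrite /= (size_rcons xs) addSnnS.
have W0 : W [:: a1] by move=> k.
have [ys [HW Hu Hall Hlast Hodd]] := walk #|X| [::] W0 ltac:(by []) ltac:(by rewrite /= Ha1) (leq_addl _ _).
pose pes := [seq odflt c1 [pick e in MM (odd k) | incident e (nth a1 (a1 :: ys) k)] | k <- iota 0 (size ys)].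
exists ys, pes; split => //; last by rewrite size_map size_iota.
apply: (jpath_nthP (e0:=c1) (v0:=a1)); first by rewrite size_map size_iota.
move=> i Hi. rewrite (nth_map 0) ?size_iota // nth_iota //= add0n.
have [e [-> _ Hje _]] := mateP (nth a1 (a1 :: ys) i) (Hpm (odd i)).
have Hi1 : i.+1 < size (a1 :: ys) by rewrite /= ltnS.
have := HW i Hi1. rewrite /= => ->. exact: Hje.
Qed.

End EvenPath.

Lemma peqE (A B : eqType) (p : A * B) a b : (p == (a, b)) = (p.1 == a) && (p.2 == b).
Proof. by case: p. Qed.

Section Contract.
Variable G : mgraph.
Variable X : {set gV G}.
Local Notation V := (gV G).
Local Notation E := (gE G).
Local Notation ends := (@gends G).
Local Notation GC := (contract X).

Lemma cmap_in v : v \in X -> cmap X v = None.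
Proof. rewrite /cmap => Hv. destruct (boolP (v \in X)) as [h|h] => //. exfalso; by move: (h); rewrite Hv. Qed.

Lemma cmap_out' v : v \notin X -> exists w, cmap X v = Some w /\ val w = v.
Proof.
rewrite /cmap => Hv. destruct (boolP (v \in X)) as [h|h].
  by rewrite h in Hv.
by exists (exist _ v h).
Qed.

Lemma cmap_out v (h : v \notin X) : cmap X v = Some (exist _ v h).
Proof.
have [w [-> Ew]] := cmap_out' h. by congr Some; apply: val_inj.
Qed.

Lemma cmap_None v : (cmap X v == None) = (v \in X).
Proof.
case: (boolP (v \in X)) => Hv; first by rewrite cmap_in.
by rewrite (cmap_out Hv).
Qed.

Lemma cmap_eqSome v (w : {v : V | v \notin X}) : (cmap X v == Some w) = (v == val w).
Proof.
case: (boolP (v \in X)) => Hv.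
  rewrite cmap_in //; apply/esym/negbTE; apply/eqP => E1.
  by have := valP w; rewrite -E1 Hv.
rewrite (cmap_out Hv). apply/eqP/eqP => [[<-] //|E1].
by congr Some; apply: val_inj.
Qed.

Lemma joins_SS (e : cE X) a b :
  @joins GC e (Some a) (Some b) = joins (val e) (val a) (val b).
Proof. by rewrite /joins /= !xpair_eqE !peqE !cmap_eqSome. Qed.

Lemma joins_NS (e : cE X) w : @joins GC e None (Some w) ->
  exists2 u, u \in X & joins (val e) u (val w).
Proof.
rewrite /joins /= !xpair_eqE !cmap_eqSome !cmap_None.
case/orP => /andP[H1 H2].
  exists (ends (val e)).1 => //. by rewrite peqE eqxx H2.
exists (ends (val e)).2 => //. by rewrite (peqE _ (val w)) eqxx H1 orbT.
Qed.

Lemma joins_SN (e : cE X) w : @joins GC e (Some w) None ->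
  exists2 u, u \in X & joins (val e) (val w) u.
Proof.
rewrite joinsC => /joins_NS [u Hu Hj]. exists u => //. by rewrite joinsC.
Qed.

Definition lv (d : V) (c : cV X) : V := if c is Some w then val w else d.

Lemma jpath_lift d a es s : None \notin a :: s -> @jpath GC a es s ->
  jpath (lv d a) (map val es) (map (lv d) s).
Proof.
elim: es a s => [|e es IH] a [|b s] //=.
rewrite !inE negb_or => /andP[Ha Hn] /andP[Hj Hp].
move: Hn; rewrite negb_or => /andP[Hb Hs].
apply/andP; split; last by apply: IH => //; rewrite inE negb_or Hb.
case: a Ha Hj => [a|] //; case: b Hb Hp => [b|] // _ _ _.
by rewrite joins_SS.
Qed.

Lemma mem_lift d (ws : seq (cV X)) v (h : v \notin X) : None \notin ws ->
  (Some (exist _ v h) \in ws) = (v \in map (lv d) ws).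
Proof.
move=> Hn. apply/idP/mapP => [Hin|[c Hc Ev]].
  by exists (Some (exist _ v h)).
case: c Hc Ev => [w|] Hc Ev; last by rewrite Hc in Hn.
rewrite (_ : exist _ v h = w) //. apply: val_inj => /=. exact: Ev.
Qed.

Lemma lv_inj d (ws : seq (cV X)) : None \notin ws -> {in ws &, injective (lv d)}.
Proof.
move=> Hn [a|] [b|] Ha Hb //=; try by rewrite ?Ha ?Hb in Hn.
by move/val_inj => ->.
Qed.

Definition proj (M : {set E}) : {set cE X} := [set e | val e \in M].

Lemma card_lift (P : pred E) :
  (forall f, P f -> ((ends f).1 \notin X) || ((ends f).2 \notin X)) ->
  #|[set e : cE X | P (val e)]| = #|[set f | P f]|.
Proof.
move=> HP. rewrite -(card_imset _ val_inj). apply: eq_card => f.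
rewrite inE; apply/imsetP/idP => [[e He ->]|Hf]; first by rewrite inE in He.
by exists (exist _ f (HP f Hf)); rewrite ?inE.
Qed.

Lemma cut_ends (f : E) : f \in cut X ->
  ((ends f).1 \notin X) || ((ends f).2 \notin X).
Proof. by rewrite inE; case: ((ends f).1 \in X); case: ((ends f).2 \in X). Qed.

Lemma proj_pm (S : {set V}) (M : {set E}) (Sc : {set cV X}) (b : bool) :
  perfect_matching_avoiding S M -> #|M :&: cut X| = (~~ b : nat) -> (None \in Sc) = b ->
  (forall v (h : v \notin X), (Some (exist _ v h) \in Sc) = (v \in S)) ->
  @perfect_matching_avoiding GC Sc (proj M).
Proof.
move=> /andP[/forall_inP HM1 /forall_inP HM2] Hcard HN HS.
have Hcut0 : b -> forall f, f \in M -> f \notin cut X.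
  move=> Hb f Hf; apply/negP => Hfc.
  have : 0 < #|M :&: cut X| by apply/card_gt0P; exists f; rewrite inE Hf Hfc.
  by rewrite Hcard Hb.
apply/andP; split.
- apply/forall_inP => e; rewrite inE => HeM.
  have/andP[h1 h2] := HM1 _ HeM.
  have Hv := valP e.
  have hh : forall x, x \notin S -> (x \in X -> val e \in cut X) -> cmap X x \notin Sc.
    move=> x Hx Hxc. case: (boolP (x \in X)) => HxX.
      rewrite cmap_in // HN. apply/negP => Hb.
      by move: (Hcut0 Hb _ HeM); rewrite Hxc.
    by rewrite (cmap_out HxX) HS.
  rewrite /= !hh //.
    move=> Hx2; rewrite inE Hx2. move: Hv => /=. rewrite Hx2 orbF.
    by case: ((ends (val e)).1 \in X).
  move=> Hx1; rewrite inE Hx1. move: Hv => /=. by rewrite Hx1 /= => ->.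
- apply/forall_inP => c; rewrite inE => Hc.
  case: c Hc => [w|] Hc.
  + have Hv : val w \notin S.
      by move: Hc; case: w => v h; rewrite HS.
    have -> : [set e in proj M | @incident GC e (Some w)] =
              [set e : cE X | (val e \in M) && incident (val e) (val w)].
      by apply/setP => e; rewrite !inE /incident /= !cmap_eqSome.
    rewrite (@card_lift (fun f => (f \in M) && incident f (val w))).
      have := HM2 (val w); rewrite inE => /(_ Hv). by [].
    move=> f /andP[_]. rewrite /incident => /orP[]/eqP ->; by rewrite (valP w) ?orbT.
  + have Hb : b = false by rewrite -HN; apply/negbTE.
    have -> : [set e in proj M | @incident GC e None] =
              [set e : cE X | (val e \in M) && (val e \in cut X)].
      apply/setP => e; rewrite !inE /incident /= !cmap_None.
      have := valP e; rewrite /=.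
      by case: ((ends (val e)).1 \in X); case: ((ends (val e)).2 \in X).
    rewrite (@card_lift (fun f => (f \in M) && (f \in cut X))); last by move=> f /andP[_ /cut_ends].
    have -> : [set f | (f \in M) && (f \in cut X)] = M :&: cut X.
      by apply/setP => f; rewrite !inE.
    by rewrite Hcard Hb.
Qed.

End Contract.

Section Contract2.
Variable G : mgraph.
Variable X : {set gV G}.
Local Notation V := (gV G).
Local Notation E := (gE G).
Local Notation ends := (@gends G).
Local Notation GC := (contract X).

Lemma cycle_ends_c (vs : seq (cV X)) (es : seq (cE X)) e : @is_cycle GC vs es -> e \in es ->
  (cmap X (ends (val e)).1 \in vs) && (cmap X (ends (val e)).2 \in vs).
Proof.
case: vs => [|a s] Hc; first by case/and5P: Hc.
move: Hc; rewrite is_cycleE => /and5P[_ _ _ _ Hp] He.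
have Hm : forall x, (x \in a :: rcons s a) = (x \in a :: s).
  by move=> x; rewrite !in_cons mem_rcons in_cons orbA orbb.
by have := jpath_ends Hp He; rewrite /= !Hm.
Qed.

Lemma case1 (d : V) (Ht : tight_cut X) (Hyp : cyc_ext_hyp G)
  (vs : seq (cV X)) (es : seq (cE X)) :
  None \notin vs -> @is_cycle GC vs es -> ~~ odd (size vs) ->
  exists M, @perfect_matching_avoiding GC [set c in vs] M.
Proof.
move=> HN Hc Hodd.
have Hc' : is_cycle (map (lv d) vs) (map val es).
  case: vs HN Hc Hodd => [|a s] HN Hc Hodd; first by case/and5P: Hc.
  move: Hc; rewrite [map _ (a :: s)]/= !is_cycleE => /and5P[H1 H2 H3 H4 H5].
  apply/and5P; split.
  - by rewrite size_map.
  - by rewrite !size_map.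
  - rewrite -map_cons map_inj_in_uniq //. exact: lv_inj.
  - by rewrite map_inj_uniq //; exact: val_inj.
  - rewrite -map_rcons. apply: jpath_lift => //.
    rewrite -rcons_cons mem_rcons in_cons negb_or HN andbT.
    by move: HN; rewrite in_cons negb_or => /andP[].
have Hodd' : ~~ odd (size (map (lv d) vs)) by rewrite size_map.
have Hnocut : forall f, f \in map val es -> f \notin cut X.
  move=> f /mapP[e He ->].
  have/andP[h1 h2] := cycle_ends_c Hc He.
  have n1 : (ends (val e)).1 \notin X.
    by rewrite -cmap_None; apply/eqP => E1; move: h1; rewrite E1 (negbTE HN).
  have n2 : (ends (val e)).2 \notin X.
    by rewrite -cmap_None; apply/eqP => E1; move: h2; rewrite E1 (negbTE HN).
  by rewrite inE (negbTE n1) (negbTE n2).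
have [M [HM Hcard]] := ext_cut1 Ht Hyp Hc' Hodd' Hnocut.
exists (proj X M). apply: (proj_pm (b := false)) HM _ _ _ => //.
  by rewrite inE (negbTE HN).
move=> v h. by rewrite !inE (mem_lift d h HN).
Qed.

Lemma case2 (Hl : loopless G) (Ht : tight_cut X)
  (Hmc : forall e : E, exists M, perfect_matching M && (e \in M)) (Hyp : cyc_ext_hyp G)
  (ws : seq (cV X)) (es : seq (cE X)) :
  @is_cycle GC (None :: ws) es -> ~~ odd (size (None :: ws)) ->
  exists M, @perfect_matching_avoiding GC [set c in None :: ws] M.
Proof.
rewrite is_cycleE => /and5P[Hws /eqP Hsz Hu Hue Hp] Hodd.
case: ws Hws Hsz Hu Hp Hodd => [|w wt] // _ Hsz Hu Hp Hodd.
case: es Hsz Hue Hp => [|f1 esr] // [Hsz] Hue Hp.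
case/lastP: esr Hsz Hue Hp => [|fs f2] Hsz Hue Hp; first by [].
rewrite size_rcons in Hsz; case: Hsz => Hsz.
move: Hp => /= /andP[Hj1 Hp].
rewrite -!cats1 jpath_cat // /= andbT in Hp.
case/andP: Hp => Hpw Hj2.
have HNw : None \notin w :: wt by move: Hu => /andP[].
have Huw : uniq (w :: wt) by move: Hu => /andP[].
case: w HNw Hj1 Hpw Hj2 Huw Hu Hodd => [w0|]; last by rewrite mem_head.
move=> HNw Hj1 Hpw Hj2 Huw Hu Hodd.
have [u1 Hu1X Hju1] := joins_NS Hj1.
have [z0 Ez] : exists z0, last (Some w0) wt = Some z0.
  case E1: (last (Some w0) wt) => [z0|]; first by exists z0.
  by have := mem_last (Some w0) wt; rewrite E1 (negbTE HNw).
rewrite Ez in Hj2.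
have [u2 Hu2X Hju2] := joins_SN Hj2.
have Hj1' : joins (val f2) u2 (val z0) by rewrite joinsC.
have Hj2' : joins (val f1) u1 (val w0) by [].
have [pvs [pes [Hpp Hlast Hup Hallp Hevp]]] :=
  even_path Hl Ht Hmc Hj1' Hu2X (valP z0) Hj2' Hu1X (valP w0).
pose d := u1.
have Hpes : forall e, e \in pes -> ((ends e).1 \in X) && ((ends e).2 \in X).
  move=> e He; have/andP[h1 h2] := jpath_ends Hpp He.
  by rewrite (allP Hallp _ h1) (allP Hallp _ h2).
have Hval : forall e' : cE X, val e' \notin pes.
  move=> e'; apply/negP => /Hpes /andP[h1 h2]; have := valP e'; by rewrite /= h1 h2.
have Hnx : forall c : cV X, c != None -> lv d c \notin X.
  by case=> [w|] //= _; exact: (valP w).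
pose vs' := map (lv d) (Some w0 :: wt) ++ u2 :: pvs.
pose es' := map val fs ++ val f2 :: pes ++ [:: val f1].
move: Hue; rewrite /= rcons_uniq mem_rcons in_cons negb_or => /andP[/andP[Hf12 Hf1fs] /andP[Hf2fs Hufs]].
have Hspp := jpath_size Hpp.
have Hc' : is_cycle vs' es'.
  have -> : vs' = val w0 :: (map (lv d) wt ++ u2 :: pvs) by [].
  rewrite is_cycleE; apply/and5P; split.
  - by rewrite size_cat /= addnS.
  - by rewrite /es' !size_cat /= size_cat !size_map /= Hsz Hspp addn1 !addnS.
  - rewrite -[val w0 :: _]/(map (lv d) (Some w0 :: wt) ++ u2 :: pvs).
    rewrite cat_uniq map_inj_in_uniq; last exact: lv_inj.
    apply/and3P; split => //.
    apply/hasPn => x Hx; apply/negP => /mapP[c Hc Ex].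
    have Hc0 : c != None by apply/eqP => E1; rewrite -E1 Hc in HNw.
    by have := Hnx c Hc0; rewrite -Ex (allP Hallp x Hx).
  - rewrite /es' cat_uniq map_inj_uniq ?Hufs; last exact: val_inj.
    apply/and3P; split => //.
      apply/hasPn => x; rewrite in_cons mem_cat mem_seq1 => /orP[/eqP->|/orP[Hx|/eqP->]].
      + by rewrite (mem_map val_inj).
      + by apply/mapP => -[e' _ Ex]; have := Hval e'; rewrite -Ex Hx.
      + by rewrite (mem_map val_inj).
    rewrite /= mem_cat mem_seq1 negb_or (Hval f2) (inj_eq val_inj) eq_sym Hf12 /=.
    rewrite cat_uniq (jpath_uniq Hpp Hup) /= orbF andbT. exact: (Hval f1).
  - rewrite rcons_cat rcons_cons /es' jpath_cat; last by rewrite !size_map.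
    apply/andP; split; first exact: (jpath_lift d HNw Hpw).
    have -> : last (val w0) (map (lv d) wt) = val z0.
      by rewrite -[val w0]/(lv d (Some w0)) last_map Ez.
    by rewrite /= Hju2 /= -cats1 jpath_cat ?Hspp // Hpp Hlast /= andbT.
have Hodd' : ~~ odd (size vs').
  rewrite /vs' size_cat /= size_map -Hspp negbK addnS /= oddD.
  by move: Hodd Hevp => /=; rewrite negbK; case: (odd _); case: (odd _).
have Hf1in : val f1 \in es'.
  by rewrite /es' mem_cat in_cons mem_cat mem_seq1 eqxx !orbT.
have Hf1cut : val f1 \in cut X := joins_cut Hju1 Hu1X (valP w0).
have [M [HM Hcard]] := ext_cut0 Ht Hyp Hc' Hodd' Hf1in Hf1cut.
exists (proj X M). apply: (proj_pm (b := true)) HM _ _ _ => //.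
  by rewrite inE mem_head.
move=> v h. rewrite !in_set /vs' mem_cat.
have Hv2 : (v \in u2 :: pvs) = false.
  by apply/negbTE/negP => /(allP Hallp); rewrite (negbTE h).
by rewrite Hv2 orbF in_cons /= (mem_lift d h HNw).
Qed.

End Contract2.

Lemma contract_ce (G : mgraph) (X : {set gV G}) :
  cycle_extendable G -> tight_cut X -> cycle_extendable (contract X).
Proof.
case=> [[Hl Hconn H2 Hmc] Hcyc] Ht.
have Hyp : cyc_ext_hyp G := Hcyc.
have [a [b [_ _ Hab]]] : exists a b : gV G, [/\ a \in gV G, b \in gV G & a != b].
  by apply/card_gt1P.
have [p Hp Eb] := connectP (Hconn a b).
case: p Hp Eb => [|x p] /=; first by move=> _ Eb; rewrite Eb eqxx in Hab.
case/andP => /existsP[e0 He0] _ _.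
have [M0 /andP[HM0 _]] := Hmc e0.
have Hc1 := Ht M0 HM0.
have [f Hf] : exists f, f \in M0 :&: cut X by apply/card_gt0P; rewrite Hc1.
rewrite inE in Hf; case/andP: Hf => _ Hfc.
have [x0 Hx0 [y0 Hy0]] : exists2 x0, x0 \in X & exists y0, y0 \notin X.
  move: Hfc; rewrite inE.
  case E1: ((gends f).1 \in X); case E2: ((gends f).2 \in X) => //= _.
    by exists (gends f).1 => //; exists (gends f).2; rewrite E2.
  by exists (gends f).2 => //; exists (gends f).1; rewrite E1.
split; [split|].
- apply/forallP => e /=.
  have Hv := valP e. apply/eqP => E1. move: Hv => /=.
  case: (boolP ((gends (val e)).1 \in X)) => H1.
    rewrite (cmap_in H1) in E1. move/eqP: E1; rewrite eq_sym cmap_None => H2'.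
    by rewrite H2'.
  rewrite (cmap_out H1) in E1. move/esym/eqP: E1; rewrite cmap_eqSome /= => /eqP E2.
  by have := (forallP Hl) (val e); rewrite E2 eqxx.
- have Hlift : forall a b : gV G, connect (@adjacent G) a b ->
      connect (@adjacent (contract X)) (cmap X a) (cmap X b).
    move=> a' b' /connectP[q Hq ->]. elim: q a' Hq => [|c q IH] a' /=.
      by rewrite connect0.
    case/andP => Hac Hq. apply: connect_trans (IH c Hq).
    case: (eqVneq (cmap X a') (cmap X c)) => [->|Hne]; first exact: connect0.
    apply: connect1. have [e He] := existsP Hac.
    have Hacx : (a' \notin X) || (c \notin X).
      rewrite -negb_and; apply/negP => /andP[Ha Hc].
      by move: Hne; rewrite !cmap_in // eqxx.
    have Hee : ((gends e).1 \notin X) || ((gends e).2 \notin X).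
      by case/orP: He => /eqP ->; rewrite //= orbC.
    apply/existsP; exists (exist _ e Hee).
    have Hce : @gends (contract X) (exist _ e Hee) = (cmap X (gends e).1, cmap X (gends e).2).
      by [].
    rewrite /joins Hce.
    by case/orP: He => /eqP -> /=; rewrite eqxx ?orbT.
  have Hsurj : forall u : cV X, exists x, cmap X x = u.
    case=> [[v h]|]; first by exists v; rewrite (cmap_out h).
    by exists x0; rewrite cmap_in.
  move=> u v. have [xu <-] := Hsurj u. have [xv <-] := Hsurj v. exact: Hlift.
- apply/card_gt1P; exists None, (Some (exist _ y0 Hy0)). by split.
- move=> e. have [M /andP[HM HeM]] := Hmc (val e). exists (proj X M).
  rewrite inE HeM andbT. have HcM := Ht M HM.
  apply: (proj_pm (S := set0) (Sc := set0) (b := false)) HM _ _ _ => //.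
    by rewrite inE.
  by move=> v h; rewrite !inE.
- move=> vs es Hc Hodd.
  case: (boolP (None \in vs)) => HN; last exact: (case1 x0 Ht Hyp HN Hc Hodd).
  have Hi : index None vs <= size vs := index_size None vs.
  have Hc' := is_cycle_rot Hi Hc.
  have Erot : rot (index None vs) vs =
      None :: (drop (index None vs).+1 vs ++ take (index None vs) vs).
    by rewrite /rot (drop_nth None) ?index_mem // nth_index.
  rewrite Erot in Hc'.
  have Hodd' : ~~ odd (size (None :: (drop (index None vs).+1 vs ++ take (index None vs) vs))).
    by rewrite -Erot size_rot.
  have [M HM] := case2 Hl Ht Hmc Hyp Hc' Hodd'.
  exists M.
  rewrite (_ : [set c in vs] =
    [set c in None :: (drop (index None vs).+1 vs ++ take (index None vs) vs)]) //.
  by apply/setP => c; rewrite !in_set -Erot mem_rot.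
Qed.

Lemma tight_compl (G : mgraph) (X : {set gV G}) : tight_cut X -> tight_cut (~: X).
Proof.
rewrite /tight_cut.
have -> : cut (~: X) = cut X.
  apply/setP => e; rewrite !inE.
  by case: (_ \in X); case: (_ \in X).
by [].
Qed.

Theorem corollary2p5 (G : mgraph) :
  cycle_extendable G ->
  forall H : mgraph, (brick_of G H \/ brace_of G H) -> cycle_extendable H.
Proof.
move=> Hce H Hor.
have Hr : tc_reach G H by case: Hor => -[].
elim: Hr Hce => [G0|G0 X H0 _ Ht _ IH|G0 X H0 _ Ht _ IH] Hce //.
  by apply: IH; apply: contract_ce.
by apply: IH; apply: contract_ce => //; apply: tight_compl.
Qed.
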